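(* In the setting below, for every $\varphi\in X_N$ and $x\in\mathbb{T}_N$: (i) $0\le(\Pi_x\varphi,\varphi)_+\le\sum_{y\in Q_-+x}(A\nabla\varphi(y),\nabla\varphi(y))$; (ii) $0\le(\mathcal{T}\varphi,\varphi)_+\le(\varphi,\varphi)_+$, and both inequalities are strict if $\varphi\ne0$; (iii) $(\mathcal{T}\varphi,\mathcal{T}\varphi)_+\le(\mathcal{T}\varphi,\varphi)_+$.
   Context: Standing: $d\ge2$, $m\ge1$, $L\ge3$ odd, $N\ge1$. $\mathbb{T}_N=(\mathbb{Z}/L^N\mathbb{Z})^d$. $X_N$: maps $\mathbb{T}_N\to\mathbb{R}^m$ with zero sum. $(\nabla_j\varphi)(x)=\varphi(x+e_j)-\varphi(x)$, $\nabla\varphi(x)\in\mathbb{R}^{m\times d}$. $A:\mathbb{R}^{m\times d}\to\mathbb{R}^{m\times d}$ linear, symmetric w.r.t. Frobenius inner product $(\cdot,\cdot)$, $(AF,F)\ge c_0|F|^2$, $c_0>0$; $(\varphi,\psi)_+=\sum_x(A\nabla\varphi(x),\nabla\psi(x))$. Let $l\ge3$ be an integer with $l-1<L^N$; $Q=\{1,\dots,l-1\}^d$, $Q_-=\{0,\dots,l-1\}^d$ in $\mathbb{T}_N$. $\Pi_x$ is the $(\cdot,\cdot)_+$-orthogonal projection of $X_N$ onto $\{\varphi\in X_N:\varphi=0\text{ outside }Q+x\}$; $\mathcal{T}=l^{-d}\sum_{x\in\mathbb{T}_N}\Pi_x$. *)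

(* Defs.v *)
From mathcomp Require Import all_boot all_order all_algebra.
From Stdlib Require Import ClassicalEpsilon.
Set Implicit Arguments. Unset Strict Implicit. Unset Printing Implicit Defensive.
Import Order.TTheory GRing.Theory Num.Theory.
Local Open Scope ring_scope.

(* Points of the torus (Z / n Z)^d, as row vectors over 'Z_n (n = L^N >= 3). *)
Definition pt (d n : nat) := 'rV['Z_n]_d.

Definition field (R : realFieldType) (d n m : nat) := {ffun pt d n -> 'cV[R]_m}.

Definition unitv (d n : nat) (j : 'I_d) : pt d n := delta_mx 0 j.

Definition frob (R : realFieldType) (m d : nat) (F G : 'M[R]_(m, d)) : R :=
  \sum_(i < m) \sum_(j < d) F i j * G i j.

Definition grad (R : realFieldType) (d n m : nat) (phi : field R d n m)
  (x : pt d n) : 'M[R]_(m, d) :=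
  \matrix_(a < m, j < d) (phi (x + unitv n j) a 0 - phi x a 0).

Definition in_X (R : realFieldType) (d n m : nat) (phi : field R d n m) : Prop :=
  \sum_(x : pt d n) phi x = 0.

Definition ipA (R : realFieldType) (d n m : nat)
  (A : 'M[R]_(m, d) -> 'M[R]_(m, d)) (phi psi : field R d n m) : R :=
  \sum_(x : pt d n) frob (A (grad phi x)) (grad psi x).

(* Q = {1,...,l-1}^d and Q_- = {0,...,l-1}^d, embedded in the torus
   (injectively since l-1 < n). *)
Definition inQ (d n : nat) (l : nat) (y : pt d n) : bool :=
  [forall i : 'I_d, (1 <= (y ord0 i : nat) <= l - 1)%N].
Definition inQminus (d n : nat) (l : nat) (y : pt d n) : bool :=
  [forall i : 'I_d, ((y ord0 i : nat) <= l - 1)%N].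

Definition in_Vx (R : realFieldType) (d n m : nat) (l : nat) (x : pt d n)
  (psi : field R d n m) : Prop :=
  in_X psi /\ forall y : pt d n, ~~ inQ l (y - x) -> psi y = 0.

Definition is_proj (R : realFieldType) (d n m : nat)
  (A : 'M[R]_(m, d) -> 'M[R]_(m, d)) (l : nat) (x : pt d n)
  (phi psi : field R d n m) : Prop :=
  in_Vx l x psi /\ forall eta, in_Vx l x eta -> ipA A (phi - psi) eta = 0.

Definition Pi (R : realFieldType) (d n m : nat)
  (A : 'M[R]_(m, d) -> 'M[R]_(m, d)) (l : nat) (x : pt d n)
  (phi : field R d n m) : field R d n m :=
  epsilon (inhabits 0) (is_proj A l x phi).

Definition TT (R : realFieldType) (d n m : nat)
  (A : 'M[R]_(m, d) -> 'M[R]_(m, d)) (l : nat)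
  (phi : field R d n m) : field R d n m :=
  ((l%:R : R) ^- d) *: \sum_(x : pt d n) Pi A l x phi.

(* Main.v *)
Require Import Defs.
From HB Require Import structures.
From mathcomp Require Import all_boot all_order all_algebra.
From mathcomp Require Import zify.
From Stdlib Require Import ClassicalEpsilon.
Set Implicit Arguments. Unset Strict Implicit. Unset Printing Implicit Defensive.
Import Order.TTheory GRing.Theory Num.Theory.
Local Open Scope ring_scope.

Section Frob.
Variables (R : realFieldType) (m d : nat).
Implicit Types F G : 'M[R]_(m, d).

Lemma frobC F G : frob F G = frob G F.
Proof. by apply: eq_bigr => i _; apply: eq_bigr => j _; rewrite mulrC. Qed.

Lemma frobDl F F' G : frob (F + F') G = frob F G + frob F' G.
Proof.
rewrite /frob -big_split; apply: eq_bigr => i _; rewrite -big_split.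
by apply: eq_bigr => j _; rewrite mxE mulrDl.
Qed.

Lemma frobZl a F G : frob (a *: F) G = a * frob F G.
Proof.
rewrite /frob mulr_sumr; apply: eq_bigr => i _; rewrite mulr_sumr.
by apply: eq_bigr => j _; rewrite mxE mulrA.
Qed.

Lemma frob0l G : frob 0 G = 0.
Proof. by rewrite /frob big1 // => i _; rewrite big1 // => j _; rewrite mxE mul0r. Qed.

Lemma frobDr F G G' : frob F (G + G') = frob F G + frob F G'.
Proof. by rewrite frobC frobDl -!(frobC F). Qed.

Lemma frobZr a F G : frob F (a *: G) = a * frob F G.
Proof. by rewrite frobC frobZl frobC. Qed.

Lemma frob0r F : frob F 0 = 0.
Proof. by rewrite frobC frob0l. Qed.

Lemma frob_ge0 F : 0 <= frob F F.
Proof.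
by apply: sumr_ge0 => i _; apply: sumr_ge0 => j _; rewrite -expr2 sqr_ge0.
Qed.

Lemma frob_eq0 F : frob F F = 0 -> F = 0.
Proof.
move=> h; apply/matrixP => i j; rewrite mxE.
have h1 := psumr_eq0P (fun i (_ : true) => sumr_ge0 _ (fun j (_ : true) => (sqr_ge0 (F i j)))) .
rewrite /frob in h.
move: h; under eq_bigr do under eq_bigr do rewrite -expr2.
move=> /h1 /(_ i isT) /psumr_eq0P h2.
have /eqP := h2 (fun j _ => sqr_ge0 (F i j)) j isT.
by rewrite sqrf_eq0 => /eqP.
Qed.
End Frob.

Section Grad.
Variables (R : realFieldType) (d n m : nat).
Local Notation F := (field R d n m).
Implicit Types u v : F.

Lemma gradD u v y : grad (u + v) y = grad u y + grad v y.
Proof. by apply/matrixP => a j; rewrite !mxE !ffunE !mxE addrACA opprD. Qed.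

Lemma gradZ c u y : grad (c *: u) y = c *: grad u y.
Proof. by apply/matrixP => a j; rewrite !mxE !ffunE !mxE mulrBr. Qed.

Lemma grad0 y : grad (0 : F) y = 0.
Proof. by apply/matrixP => a j; rewrite !mxE !ffunE !mxE subrr. Qed.

Lemma gradN u y : grad (- u) y = - grad u y.
Proof. by rewrite -scaleN1r gradZ scaleN1r. Qed.

Lemma gradB u v y : grad (u - v) y = grad u y - grad v y.
Proof. by rewrite gradD gradN. Qed.
End Grad.

Section Form.
Variables (R : realFieldType) (d n m : nat).
Variable (A : 'M[R]_(m, d) -> 'M[R]_(m, d)).
Hypothesis hAlin : linear A.
Hypothesis hAsym : forall F G, frob (A F) G = frob F (A G).
Local Notation F := (field R d n m).
Implicit Types u v w : F.

Lemma A_D X Y : A (X + Y) = A X + A Y.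
Proof. by have := hAlin 1 X Y; rewrite !scale1r. Qed.
Lemma A_0 : A 0 = 0.
Proof. by have := A_D 0 0; rewrite addr0 => /eqP; rewrite -subr_eq subrr eq_sym => /eqP. Qed.
Lemma A_Z c X : A (c *: X) = c *: A X.
Proof. by have := hAlin c X 0; rewrite !addr0 A_0 addr0. Qed.

Definition ipAP (P : pred (pt d n)) u v :=
  \sum_(y | P y) frob (A (grad u y)) (grad v y).

Lemma ipA_P u v : ipA A u v = ipAP predT u v.
Proof. by []. Qed.

Lemma ipAP_sym P u v : ipAP P u v = ipAP P v u.
Proof. by apply: eq_bigr => y _; rewrite hAsym frobC. Qed.

Lemma ipAP_Dr P u v w : ipAP P u (v + w) = ipAP P u v + ipAP P u w.
Proof. by rewrite /ipAP -big_split; apply: eq_bigr => y _; rewrite gradD frobDr. Qed.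

Lemma ipAP_Zr P c u v : ipAP P u (c *: v) = c * ipAP P u v.
Proof. by rewrite /ipAP mulr_sumr; apply: eq_bigr => y _; rewrite gradZ frobZr. Qed.

Lemma ipAP_Dl P u v w : ipAP P (u + v) w = ipAP P u w + ipAP P v w.
Proof. by rewrite !(ipAP_sym P _ w) ipAP_Dr. Qed.

Lemma ipAP_Zl P c u v : ipAP P (c *: u) v = c * ipAP P u v.
Proof. by rewrite !(ipAP_sym P _ v) ipAP_Zr. Qed.

Lemma ipAP_0r P u : ipAP P u 0 = 0.
Proof. by have := ipAP_Zr P 0 u 0; rewrite scale0r mul0r. Qed.
Lemma ipAP_0l P u : ipAP P 0 u = 0.
Proof. by rewrite ipAP_sym ipAP_0r. Qed.
Lemma ipAP_Nr P u v : ipAP P u (- v) = - ipAP P u v.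
Proof. by rewrite -scaleN1r ipAP_Zr mulN1r. Qed.
Lemma ipAP_Nl P u v : ipAP P (- u) v = - ipAP P u v.
Proof. by rewrite -scaleN1r ipAP_Zl mulN1r. Qed.
Lemma ipAP_Br P u v w : ipAP P u (v - w) = ipAP P u v - ipAP P u w.
Proof. by rewrite ipAP_Dr ipAP_Nr. Qed.
Lemma ipAP_Bl P u v w : ipAP P (u - v) w = ipAP P u w - ipAP P v w.
Proof. by rewrite ipAP_Dl ipAP_Nl. Qed.

Lemma ipAP_suml P I (r : seq I) (Q : pred I) (f : I -> F) w :
  ipAP P (\sum_(i <- r | Q i) f i) w = \sum_(i <- r | Q i) ipAP P (f i) w.
Proof. by apply: (big_morph (fun u => ipAP P u w)) => [u v|]; rewrite ?ipAP_Dl ?ipAP_0l. Qed.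

Lemma ipAP_sumr P I (r : seq I) (Q : pred I) (f : I -> F) w :
  ipAP P w (\sum_(i <- r | Q i) f i) = \sum_(i <- r | Q i) ipAP P w (f i).
Proof. by apply: (big_morph (fun u => ipAP P w u)) => [u v|]; rewrite ?ipAP_Dr ?ipAP_0r. Qed.

Variable c0 : R.
Hypothesis hc0 : 0 < c0.
Hypothesis hAell : forall X, c0 * frob X X <= frob (A X) X.

Lemma frobA_ge0 X : 0 <= frob (A X) X.
Proof. exact: le_trans (mulr_ge0 (ltW hc0) (frob_ge0 X)) (hAell X). Qed.

Lemma frobA_eq0 X : frob (A X) X <= 0 -> X = 0.
Proof.
move=> h; apply: frob_eq0; apply/eqP; rewrite eq_le frob_ge0 andbT.
by rewrite -(pmulr_rle0 _ hc0); apply: le_trans (hAell X) h.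
Qed.

Lemma ipAP_ge0 P u : 0 <= ipAP P u u.
Proof. by apply: sumr_ge0 => y _; apply: frobA_ge0. Qed.

Lemma ipAP_eq0 P u : ipAP P u u <= 0 -> forall y, P y -> grad u y = 0.
Proof.
move=> h y Py; apply: frobA_eq0.
have h0 : ipAP P u u = 0 by apply/eqP; rewrite eq_le h ipAP_ge0.
by rewrite (psumr_eq0P (fun y _ => frobA_ge0 (grad u y)) h0).
Qed.

End Form.

Section Torus.
Variables (d n : nat).
Hypothesis hn : (2 < n)%N.
Local Notation P := (pt d n).

Lemma ncast : (Zp_trunc n).+2 = n.
Proof. by apply: Zp_cast; exact: ltn_trans _ hn. Qed.

Lemma coordD (y z : P) i : nat_of_ord ((y + z) ord0 i) = ((nat_of_ord (y ord0 i) + nat_of_ord (z ord0 i)) %% n)%N.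
Proof. by rewrite mxE /=; congr (_ %% _)%N; exact: ncast. Qed.

Lemma coord_lt (y : P) i : (nat_of_ord (y ord0 i) < n)%N.
Proof. by apply: leq_trans (ltn_ord _) _; rewrite ncast. Qed.

Lemma coord_e j i : nat_of_ord ((unitv n j : P) ord0 i) = (i == j).
Proof.
rewrite /unitv mxE eqxx /= (val_Zp_nat (ltn_trans (isT : (1 < 2)%N) hn)).
by case: (i == j); rewrite ?mod0n // modn_small //; exact: ltn_trans _ hn.
Qed.

Lemma coord_1 i : nat_of_ord ((const_mx 1 : P) ord0 i) = 1%N.
Proof. by rewrite mxE -[1]/(1%:R) val_Zp_nat ?modn_small //; exact: ltn_trans _ hn. Qed.

Lemma coord0 i : nat_of_ord ((0 : P) ord0 i) = 0%N.
Proof. by rewrite mxE. Qed.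

Lemma pt_decomp (y : P) : y = \sum_(j < d) unitv n j *+ nat_of_ord (y ord0 j).
Proof.
apply/matrixP => i0 i; rewrite summxE (ord1 i0).
rewrite (bigD1 i) //= big1 => [|j /negbTE hj].
  by rewrite addr0 mulmxnE /unitv mxE !eqxx /= natr_Zp.
by rewrite mulmxnE /unitv mxE eqxx /= eq_sym hj mul0rn.
Qed.

Lemma const_shift (T : Type) (f : P -> T) :
  (forall y j, f (y + unitv n j) = f y) -> forall y, f y = f 0.
Proof.
move=> hf.
have step : forall y j k, f (y + unitv n j *+ k) = f y.
  move=> y j; elim=> [|k IH]; first by rewrite mulr0n addr0.
  by rewrite mulrS addrCA addrC hf IH.
move=> y; rewrite (pt_decomp y).
elim: (index_enum _) => [|j s IH]; first by rewrite big_nil.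
by rewrite big_cons addrC step IH.
Qed.

Lemma notQm_notQ l (z : P) : ~~ inQminus l z -> ~~ inQ l z.
Proof. by apply: contra => /forallP h; apply/forallP => i; case/andP: (h i). Qed.

Lemma notQm_notQ_shift l (z : P) j :
  (l - 1 < n)%N -> ~~ inQminus l z -> ~~ inQ l (z + unitv n j).
Proof.
move=> hl; apply: contra => /forallP h; apply/forallP => i.
have := h i; rewrite coordD coord_e; case: (i == j) => /=.
  have hz := coord_lt z i.
  rewrite addn1; case: (ltngtP (nat_of_ord (z ord0 i)).+1 n) => [lt|gt|eq].
  - by rewrite modn_small // => /andP [_ /ltnW].
  - by move: gt; rewrite ltnNge hz.
  - by rewrite eq modnn.
by rewrite addn0 modn_small ?coord_lt // => /andP [].
Qed.

Lemma notQ0 l : (0 < d)%N -> ~~ inQ l (0 : P).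
Proof. by move=> hd; apply/forallP => /(_ (Ordinal hd)); rewrite coord0. Qed.

Lemma notQe l j : (1 < d)%N -> ~~ inQ l (unitv n j : P).
Proof.
move=> hd.
have [i hij] : exists i : 'I_d, i != j.
  case: (eqVneq (nat_of_ord j) 0%N) => hj.
    by exists (Ordinal hd); rewrite -val_eqE /= hj.
  by exists (Ordinal (ltn_trans (ltn0Sn 0) hd)); rewrite -val_eqE /= eq_sym.
by apply/forallP => /(_ i); rewrite coord_e (negbTE hij).
Qed.

Lemma Q_ones l : (2 < l)%N -> inQ l (const_mx 1 : P).
Proof. by move=> hl; apply/forallP => i; rewrite coord_1 /=; lia. Qed.

Lemma Q_ones_e l j : (2 < l)%N -> inQ l (const_mx 1 + unitv n j : P).
Proof.
move=> hl; apply/forallP => i; rewrite coordD coord_1 coord_e.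
rewrite modn_small; last by case: (i == j) => //; apply: ltn_trans hn.
by case: (i == j) => /=; lia.
Qed.

Lemma Qm0 l : inQminus l (0 : P).
Proof. by apply/forallP => i; rewrite coord0. Qed.

Lemma card_Qm l (y : P) : (0 < l)%N ->
  (#|[pred x : P | inQminus l (y - x)%R]| <= l ^ d)%N.
Proof.
move=> hl.
pose g (x : P) : {ffun 'I_d -> 'I_(l.-1).+1} :=
  [ffun i => inord (nat_of_ord ((y - x)%R ord0 i))].
have ginj : {in [pred x : P | inQminus l (y - x)%R] &, injective g}.
  move=> x1 x2 /forallP h1 /forallP h2 /ffunP hg.
  have : y - x1 = y - x2.
    apply/matrixP => i0 i; rewrite (ord1 i0); apply/val_inj.
    have := hg i; rewrite !ffunE => /(congr1 val).
    rewrite /= !inordK // ltnS -subn1; by [apply: h1 | apply: h2].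
  by move/addrI/oppr_inj.
rewrite -(card_in_imset ginj).
apply: leq_trans (max_card _) _.
by rewrite card_ffun !card_ord prednK.
Qed.
End Torus.

Section GS.
Variables (R : realFieldType) (vT : vectType R) (B : vT -> vT -> R).
Hypothesis BDl : forall u v w, B (u + v) w = B u w + B v w.
Hypothesis BZl : forall c u w, B (c *: u) w = c * B u w.
Hypothesis Bsym : forall u v, B u v = B v u.

Lemma BDr u v w : B w (u + v) = B w u + B w v.
Proof. by rewrite !(Bsym w) BDl. Qed.
Lemma BZr c u w : B w (c *: u) = c * B w u.
Proof. by rewrite !(Bsym w) BZl. Qed.
Lemma B0l w : B 0 w = 0.
Proof. by have := BZl 0 0 w; rewrite scale0r mul0r. Qed.
Lemma BNl u w : B (- u) w = - B u w.
Proof. by rewrite -scaleN1r BZl mulN1r. Qed.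
Lemma BBl u v w : B (u - v) w = B u w - B v w.
Proof. by rewrite BDl BNl. Qed.
Lemma BBr u v w : B w (u - v) = B w u - B w v.
Proof. by rewrite !(Bsym w) BBl. Qed.
Lemma B0r w : B w 0 = 0.
Proof. by rewrite Bsym B0l. Qed.

Variable U : {vspace vT}.
Hypothesis hdef : forall u, u \in U -> B u u = 0 -> u = 0.

Lemma gs (s : seq vT) : {subset s <= U} -> forall v,
  exists2 P, P \in <<s>>%VS & forall w, w \in <<s>>%VS -> B (v - P) w = 0.
Proof.
elim: s => [|z s IH] hs v.
  exists 0; first by rewrite mem0v.
  by move=> w; rewrite span_nil memv0 => /eqP ->; rewrite B0r.
have hs' : {subset s <= U} by move=> u us; apply: hs; rewrite inE us orbT.
have [Pz Pzs oz] := IH hs' z.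
have [Pv Pvs ov] := IH hs' v.
have sU : (<<s>> <= U)%VS by apply/span_subvP.
pose w' := z - Pz.
have w'U : w' \in U.
  by rewrite memvB //; [apply: hs; rewrite inE eqxx | apply: (subvP sU)].
have orthw' : forall b, b \in <<s>>%VS -> B w' b = 0 by [].
have sub : (<<s>> <= <<z :: s>>)%VS by rewrite span_cons addvSr.
have zin : z \in <<z :: s>>%VS by rewrite span_cons; apply/memv_addP; exists z; rewrite ?memv_line //; exists 0; rewrite ?mem0v ?addr0.
have decomp : forall w, w \in <<z :: s>>%VS -> exists k, exists2 b, b \in <<s>>%VS & w = k *: z + b.
  move=> w; rewrite span_cons => /memv_addP [a /vlineP [k ->] [b bs ->]].
  by exists k, b.
case: (eqVneq (B w' w') 0) => hw.
  have hz : z = Pz by apply/eqP; rewrite -subr_eq0; apply/eqP/hdef.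
  exists Pv; first exact: (subvP sub).
  by move=> w /decomp [k [b bs ->]]; rewrite hz BDr BZr !ov // mulr0 add0r.
pose c := B (v - Pv) w' / B w' w'.
exists (Pv + c *: w').
  rewrite memvD ?memvZ ?memvB //; by apply: (subvP sub).
have e1 : forall b, b \in <<s>>%VS -> B (v - (Pv + c *: w')) b = 0.
  by move=> b bs; rewrite opprD addrA BDl ov // BNl BZl orthw' // mulr0 subr0.
move=> w /decomp [k [b bs ->]]; rewrite BDr (e1 b) // addr0 BZr.
have -> : z = w' + Pz by rewrite /w' subrK.
rewrite BDr (e1 Pz) // addr0 opprD addrA BDl BNl BZl.
have -> : B (v - Pv) w' - c * B w' w' = 0.
  by rewrite /c mulrAC -mulrA divff // mulr1 subrr.
by rewrite mulr0.
Qed.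

Lemma proj_exists v : exists2 P, P \in U & forall w, w \in U -> B (v - P) w = 0.
Proof.
have hb := vbasisP U.
have [P Ps oP] := gs (s := vbasis U) (fun u hu => vbasis_mem hu) v.
by exists P; rewrite -(span_basis hb).
Qed.
End GS.

Section Main.
Variables (R : realFieldType) (d n m : nat).
Variable (A : 'M[R]_(m, d) -> 'M[R]_(m, d)).
Hypothesis hAlin : linear A.
Hypothesis hAsym : forall F G, frob (A F) G = frob F (A G).
Variable c0 : R.
Hypothesis hc0 : 0 < c0.
Hypothesis hAell : forall X, c0 * frob X X <= frob (A X) X.
Variable l : nat.
Hypothesis hd : (2 <= d)%N.
Hypothesis hn : (2 < n)%N.
Hypothesis hl : (3 <= l)%N.
Hypothesis hln : (l - 1 < n)%N.
Local Notation F := (field R d n m).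
Local Notation P := (pt d n).
Implicit Types u v w p eta : F.

Lemma shift_zero u : in_X u -> (forall y j, u (y + unitv n j) = u y) -> u = 0.
Proof.
move=> hX hs.
have hc := const_shift hs.
have h0 : u 0 = 0.
  move: hX; rewrite /in_X (eq_bigr (fun _ => u 0)) ?sumr_const; last by move=> y _; rewrite hc.
  move/eqP; rewrite -scaler_nat scaler_eq0 pnatr_eq0 => /orP [|/eqP //].
  by move=> /eqP /card0_eq /(_ 0).
by apply/ffunP => y; rewrite hc h0 ffunE.
Qed.

Lemma grad0_shift u y j : grad u y = 0 -> u (y + unitv n j) = u y.
Proof.
move=> /matrixP h; apply/matrixP => a b; rewrite (ord1 b).
by have := h a j; rewrite !mxE => /eqP; rewrite subr_eq0 => /eqP.
Qed.

Lemma ipA_def u : in_X u -> ipA A u u <= 0 -> u = 0.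
Proof.
move=> hX h; apply: shift_zero => // y j; apply: grad0_shift.
exact: (ipAP_eq0 hc0 hAell (P := predT) h).
Qed.


Section X.
Variable x : P.

Definition fV (u : F) : (F * 'cV[R]_m)%type :=
  ([ffun y => if inQ l (y - x) then 0 else u y], \sum_y u y).

Lemma fV_lin : linear fV.
Proof.
move=> c u v; rewrite /fV; congr (_, _).
  by apply/ffunP => y; rewrite !ffunE; case: ifP; rewrite ?scaler0 ?addr0 // !ffunE.
by rewrite /= scaler_sumr -big_split; apply: eq_bigr => y _; rewrite !ffunE.
Qed.

Definition fVL : {linear F -> (F * 'cV[R]_m)%type} :=
  HB.pack fV (GRing.isLinear.Build _ _ _ _ fV fV_lin).

Definition Ux : {vspace F} := lker (linfun fVL).

Lemma memUx u : (u \in Ux) <-> in_Vx l x u.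
Proof.
rewrite /Ux memv_ker lfunE /= /fV /in_Vx /in_X.
split.
  move/eqP => h.
  have h1 := congr1 fst h; have h2 := congr1 snd h; simpl in h1, h2.
  split => // y hy; move/ffunP: h1 => /(_ y).
  by rewrite !ffunE (negbTE hy).
case=> h2 h1; apply/eqP.
have -> : [ffun y => if inQ l (y - x) then 0 else u y] = 0.
  by apply/ffunP => y; rewrite !ffunE; case: ifPn => // /h1.
by rewrite h2.
Qed.

Lemma Pi_spec u : is_proj A l x u (Pi A l x u).
Proof.
apply: epsilon_spec.
have hdef : forall w, w \in Ux -> ipA A w w = 0 -> w = 0.
  by move=> w /memUx [hX _] h0; apply: ipA_def; rewrite // h0.
have [Pp PU oP] := proj_exists (ipAP_Dl hAsym predT) (ipAP_Zl hAsym predT)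
  (ipAP_sym hAsym predT) hdef u.
exists Pp; split; first exact/memUx.
by move=> eta /memUx; exact: oP.
Qed.

End X.

Lemma ipA_Dl u v w : ipA A (u + v) w = ipA A u w + ipA A v w.
Proof. exact: (ipAP_Dl hAsym predT). Qed.
Lemma ipA_Dr u v w : ipA A w (u + v) = ipA A w u + ipA A w v.
Proof. exact: (@ipAP_Dr _ _ _ _ A predT). Qed.
Lemma ipA_Zl c u w : ipA A (c *: u) w = c * ipA A u w.
Proof. exact: (ipAP_Zl hAsym predT). Qed.
Lemma ipA_Zr c u w : ipA A w (c *: u) = c * ipA A w u.
Proof. exact: (@ipAP_Zr _ _ _ _ A predT). Qed.
Lemma ipA_Bl u v w : ipA A (u - v) w = ipA A u w - ipA A v w.
Proof. exact: (ipAP_Bl hAsym predT). Qed.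
Lemma ipA_Br u v w : ipA A w (u - v) = ipA A w u - ipA A w v.
Proof. exact: (@ipAP_Br _ _ _ _ A predT). Qed.
Lemma ipA_sym u v : ipA A u v = ipA A v u.
Proof. exact: (ipAP_sym hAsym predT). Qed.
Lemma ipA_ge0 u : 0 <= ipA A u u.
Proof. exact: (ipAP_ge0 hc0 hAell predT). Qed.
Lemma ipA_suml I (r : seq I) (Q : pred I) (f : I -> F) w :
  ipA A (\sum_(i <- r | Q i) f i) w = \sum_(i <- r | Q i) ipA A (f i) w.
Proof. exact: (ipAP_suml hAsym predT). Qed.

Lemma Vx_D x u v : in_Vx l x u -> in_Vx l x v -> in_Vx l x (u + v).
Proof. by move=> /memUx hu /memUx hv; apply/memUx; rewrite memvD. Qed.
Lemma Vx_Z x c u : in_Vx l x u -> in_Vx l x (c *: u).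
Proof. by move=> /memUx hu; apply/memUx; rewrite memvZ. Qed.
Lemma Vx_B x u v : in_Vx l x u -> in_Vx l x v -> in_Vx l x (u - v).
Proof. by move=> /memUx hu /memUx hv; apply/memUx; rewrite memvB. Qed.

Lemma Pi_uniq x u P1 P2 : is_proj A l x u P1 -> is_proj A l x u P2 -> P1 = P2.
Proof.
move=> [h1 o1] [h2 o2]; apply/eqP; rewrite -subr_eq0; apply/eqP.
have hD := Vx_B h1 h2.
apply: ipA_def; first by case: hD.
have e : P1 - P2 = (u - P2) - (u - P1) by symmetry; rewrite opprB addrC addrA subrK.
by rewrite {1}e ipA_Bl o1 // o2 // subrr.
Qed.

Lemma Pi_Vx x u : in_Vx l x (Pi A l x u).
Proof. by case: (Pi_spec x u). Qed.

Lemma Pi_orth x u eta : in_Vx l x eta -> ipA A (u - Pi A l x u) eta = 0.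
Proof. by case: (Pi_spec x u) => _; apply. Qed.

Lemma Pi_D x u v : Pi A l x (u + v) = Pi A l x u + Pi A l x v.
Proof.
apply: (Pi_uniq (Pi_spec x (u + v))); split; first exact: Vx_D (Pi_Vx _ _) (Pi_Vx _ _).
move=> eta he.
have -> : u + v - (Pi A l x u + Pi A l x v) = (u - Pi A l x u) + (v - Pi A l x v).
  by rewrite opprD addrACA.
by rewrite ipA_Dl !Pi_orth // addr0.
Qed.

Lemma Pi_Z x c u : Pi A l x (c *: u) = c *: Pi A l x u.
Proof.
apply: (Pi_uniq (Pi_spec x (c *: u))); split; first exact: Vx_Z (Pi_Vx _ _).
by move=> eta he; rewrite -scalerBr ipA_Zl Pi_orth // mulr0.
Qed.

Lemma TT_D u v : TT A l (u + v) = TT A l u + TT A l v.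
Proof. by rewrite /TT (eq_bigr _ (fun x _ => Pi_D x u v)) big_split scalerDr. Qed.

Lemma TT_Z c u : TT A l (c *: u) = c *: TT A l u.
Proof.
by rewrite /TT (eq_bigr _ (fun x _ => Pi_Z x c u)) -scaler_sumr !scalerA mulrC.
Qed.

Lemma TT_B u v : TT A l (u - v) = TT A l u - TT A l v.
Proof. by rewrite TT_D -scaleN1r TT_Z scaleN1r. Qed.

Lemma Pi_sym x u v : ipA A (Pi A l x u) v = ipA A (Pi A l x u) (Pi A l x v).
Proof.
have := Pi_orth v (Pi_Vx x u); rewrite ipA_Bl => /eqP; rewrite subr_eq0 => /eqP.
by rewrite ipA_sym => ->; rewrite ipA_sym.
Qed.

Lemma ipA_TT u v :
  ipA A (TT A l u) v = (l%:R ^- d) * \sum_x ipA A (Pi A l x u) (Pi A l x v).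
Proof. by rewrite /TT ipA_Zl ipA_suml; congr (_ * _); apply: eq_bigr => x _; rewrite Pi_sym. Qed.

Lemma TT_sym u v : ipA A (TT A l u) v = ipA A (TT A l v) u.
Proof. by rewrite !ipA_TT; congr (_ * _); apply: eq_bigr => x _; rewrite ipA_sym. Qed.

Lemma in_X_TT u : in_X (TT A l u).
Proof.
rewrite /in_X /TT (eq_bigr (fun y => l%:R ^- d *: \sum_x Pi A l x u y)); last first.
  by move=> y _; rewrite ffunE sum_ffunE.
rewrite -scaler_sumr exchange_big big1 ?scaler0 // => x _.
by case: (Pi_Vx x u) => [].
Qed.

Definition Qx (x : P) : pred P := [pred y | inQminus l (y - x)].

Lemma Vx_grad0 x p : in_Vx l x p -> forall y, ~~ inQminus l (y - x) -> grad p y = 0.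
Proof.
move=> [_ hp] y hy; apply/matrixP => a j; rewrite !mxE.
rewrite (hp y); last exact: notQm_notQ.
rewrite hp ?subrr ?mxE //.
by rewrite addrAC; apply: notQm_notQ_shift.
Qed.

Lemma ipA_loc_l x p v : in_Vx l x p -> ipA A p v = ipAP A (Qx x) p v.
Proof.
move=> hp; rewrite /ipA (bigID (Qx x)) /= [X in _ + X]big1 ?addr0 // => y hy.
by rewrite (Vx_grad0 hp hy) (A_0 hAlin) frob0l.
Qed.

Lemma ipA_loc_r x p v : in_Vx l x p -> ipA A v p = ipAP A (Qx x) v p.
Proof. by move=> hp; rewrite ipA_sym // (ipA_loc_l v hp) ipAP_sym. Qed.

Lemma loc_split x p r : in_Vx l x p -> ipA A r p = 0 ->
  ipAP A (Qx x) (p + r) (p + r) = ipA A p p + ipAP A (Qx x) r r.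
Proof.
move=> hp h.
have h0 : ipAP A (Qx x) p r = 0 by rewrite -(ipA_loc_l _ hp) ipA_sym.
rewrite !(ipAP_Dl hAsym) !(ipAP_Dr) h0 (ipAP_sym hAsym _ r) h0 add0r addr0.
by rewrite -(ipA_loc_l _ hp).
Qed.

Lemma loc_eq x u :
  ipA A (Pi A l x u) u + ipAP A (Qx x) (u - Pi A l x u) (u - Pi A l x u)
  = ipAP A (Qx x) u u.
Proof.
have hu : u = Pi A l x u + (u - Pi A l x u) by rewrite addrC subrK.
rewrite [in RHS]hu (loc_split (p := Pi A l x u) (r := u - Pi A l x u)) ?Pi_Vx ?Pi_orth ?Pi_Vx //.
  all: first [by rewrite Pi_sym | exact: Pi_Vx].
Qed.

Lemma part1 x u : 0 <= ipA A (Pi A l x u) u /\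
  ipA A (Pi A l x u) u <= ipAP A (Qx x) u u.
Proof.
split; first by rewrite Pi_sym ipA_ge0.
rewrite -(loc_eq x u) lerDl; exact: (ipAP_ge0 hc0 hAell).
Qed.

Lemma sum_loc u : \sum_x ipAP A (Qx x) u u <= ipA A u u *+ l ^ d.
Proof.
rewrite /ipAP (eq_bigr (fun x => \sum_y (if inQminus l (y - x)
   then frob (A (grad u y)) (grad u y) else 0))); last by move=> x _; rewrite big_mkcond.
rewrite exchange_big /ipA -sumrMnl; apply: ler_sum => y _.
rewrite -big_mkcond /=.
rewrite (eq_bigl (fun x => x \in [pred x : P | inQminus l (y - x)%R])) // sumr_const.
apply: ler_wpMn2l; first exact: (frobA_ge0 hc0 hAell).
by apply: card_Qm => //; apply: leq_trans _ hl.
Qed.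

Lemma kpos : 0 < (l%:R : R) ^- d.
Proof. by rewrite invr_gt0 exprn_gt0 // ltr0n; apply: leq_trans _ hl. Qed.

Lemma kinv (E : R) : (l%:R : R) ^- d * (E *+ l ^ d) = E.
Proof.
rewrite -[E *+ _]mulr_natr natrX mulrCA mulVf ?mulr1 //.
by rewrite expf_neq0 // pnatr_eq0 -lt0n; apply: leq_trans _ hl.
Qed.

Lemma TT_expand u : ipA A (TT A l u) u = (l%:R ^- d) * \sum_x ipA A (Pi A l x u) u.
Proof. by rewrite /TT ipA_Zl ipA_suml. Qed.

Lemma ipA_sumr I (r : seq I) (Q : pred I) (f : I -> F) w :
  ipA A w (\sum_(i <- r | Q i) f i) = \sum_(i <- r | Q i) ipA A w (f i).
Proof. exact: (@ipAP_sumr _ _ _ _ A predT). Qed.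

Definition dlt (z : P) (k : 'I_m) : F :=
  [ffun y => if y == z then (delta_mx k 0 : 'cV[R]_m) else 0].

Lemma decomp_F eta : eta = \sum_z \sum_(k < m) eta z k 0 *: dlt z k.
Proof.
apply/ffunP => y; rewrite sum_ffunE (bigD1 y) //= [X in _ + X]big1 => [|z hz].
  rewrite addr0 sum_ffunE.
  rewrite (eq_bigr (fun k => eta y k 0 *: (delta_mx k 0 : 'cV[R]_m))); last first.
    by move=> k _; rewrite !ffunE eqxx.
  rewrite {1}(matrix_sum_delta (eta y)); apply: eq_bigr => k _.
  by rewrite big_ord1.
rewrite sum_ffunE big1 // => k _; rewrite !ffunE.
by rewrite eq_sym (negbTE hz) scaler0.
Qed.

Lemma ipA_rep u eta :
  ipA A u eta = \sum_z \sum_(k < m) eta z k 0 * ipA A u (dlt z k).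
Proof.
rewrite {1}(decomp_F eta) ipA_sumr; apply: eq_bigr => z _.
by rewrite ipA_sumr; apply: eq_bigr => k _; rewrite ipA_Zr.
Qed.

Lemma sum_dlt z k : \sum_y dlt z k y = delta_mx k 0.
Proof.
rewrite (bigD1 z) //= ffunE eqxx big1 ?addr0 // => y hy.
by rewrite ffunE (negbTE hy).
Qed.

Lemma dlt_Vx (w a b : P) k : inQ l (a - w) -> inQ l (b - w) ->
  in_Vx l w (dlt a k - dlt b k).
Proof.
move=> ha hb; split.
  rewrite /in_X (eq_bigr (fun y => dlt a k y - dlt b k y)); last by move=> y _; rewrite !ffunE.
  by rewrite sumrB !sum_dlt subrr.
move=> y hy; rewrite !ffunE.
have -> : (y == a) = false by apply/negbTE; apply: contraNneq hy => ->.
have -> : (y == b) = false by apply/negbTE; apply: contraNneq hy => ->.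
by rewrite subrr.
Qed.

Lemma orth_zero u : in_X u -> (forall x eta, in_Vx l x eta -> ipA A u eta = 0) -> u = 0.
Proof.
move=> hX horth.
pose G z k := ipA A u (dlt z k).
have hG : forall k z j, G (z + unitv n j) k = G z k.
  move=> k z j.
  have e1 : (z + unitv n j) - (z - const_mx 1) = const_mx 1 + unitv n j.
    by rewrite opprB addrC addrA subrK.
  have e2 : z - (z - const_mx 1) = const_mx 1 :> P.
    by rewrite opprB addrC subrK.
  have := horth _ _ (dlt_Vx k (w := z - const_mx 1) (a := z + unitv n j) (b := z)
     (ltac:(rewrite e1; exact: Q_ones_e)) (ltac:(rewrite e2; exact: Q_ones))).
  by rewrite ipA_Br => /eqP; rewrite subr_eq0 => /eqP.
have hc : forall z k, G z k = G 0 k by move=> z k; exact: (const_shift (f := fun z => G z k) (hG k)).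
apply: ipA_def => //.
rewrite ipA_rep (eq_bigr (fun z => \sum_(k < m) u z k 0 * G 0 k)); last first.
  by move=> z _; apply: eq_bigr => k _; congr (_ * _); exact: hc.
rewrite exchange_big big1 // => k _.
rewrite -mulr_suml.
have -> : \sum_z u z k 0 = (\sum_z u z) k 0 by rewrite summxE.
by move: hX; rewrite /in_X => ->; rewrite mxE mul0r.
Qed.

Lemma S1_split u : \sum_x ipA A (Pi A l x u) u
  + \sum_x ipAP A (Qx x) (u - Pi A l x u) (u - Pi A l x u)
  = \sum_x ipAP A (Qx x) u u.
Proof. by rewrite -big_split; apply: eq_bigr => x _; exact: loc_eq. Qed.

Lemma S1_ge0 u : 0 <= \sum_x ipA A (Pi A l x u) u.
Proof. by apply: sumr_ge0 => x _; rewrite Pi_sym ipA_ge0. Qed.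

Lemma S2_ge0 u : 0 <= \sum_x ipAP A (Qx x) (u - Pi A l x u) (u - Pi A l x u).
Proof. by apply: sumr_ge0 => x _; exact: (ipAP_ge0 hc0 hAell). Qed.

Lemma TT_upper u : ipA A (TT A l u) u <= ipA A u u.
Proof.
rewrite TT_expand -[X in _ <= X](kinv (ipA A u u)).
apply: ler_wpM2l; first exact: ltW kpos.
apply: le_trans (sum_loc u); rewrite -S1_split lerDl; exact: S2_ge0.
Qed.

Lemma TT_lower u : 0 <= ipA A (TT A l u) u.
Proof. by rewrite TT_expand mulr_ge0 ?S1_ge0 // ltW // kpos. Qed.

Lemma TT_strict_lower u : in_X u -> u != 0 -> 0 < ipA A (TT A l u) u.
Proof.
move=> hX hu0; rewrite ltNge; apply/negP => h.
rewrite TT_expand pmulr_rle0 ?kpos // in h.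
have h0 : \sum_x ipA A (Pi A l x u) u = 0 by apply/eqP; rewrite eq_le h S1_ge0.
have hz : forall x, Pi A l x u = 0.
  move=> x; apply: ipA_def; first by case: (Pi_Vx x u).
  rewrite -Pi_sym (psumr_eq0P _ h0) // => y _; rewrite Pi_sym; exact: ipA_ge0.
move/eqP: hu0; apply; apply: orth_zero => // x eta he.
by rewrite -(Pi_orth u he) hz subr0.
Qed.

Lemma TT_strict_upper u : in_X u -> u != 0 -> ipA A (TT A l u) u < ipA A u u.
Proof.
move=> hX hu0; rewrite ltNge; apply/negP => h.
set S2 := \sum_x ipAP A (Qx x) (u - Pi A l x u) (u - Pi A l x u).
have hS : ipA A (TT A l u) u = (l%:R ^- d) * (\sum_x ipAP A (Qx x) u u) - (l%:R ^- d) * S2.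
  by rewrite TT_expand -mulrBr -(S1_split u) addrK.
have hle : (l%:R ^- d) * (\sum_x ipAP A (Qx x) u u) <= ipA A u u.
  rewrite -[X in _ <= X](kinv (ipA A u u)); apply: ler_wpM2l; first exact: ltW kpos.
  exact: sum_loc.
have hS2 : S2 <= 0.
  rewrite -(pmulr_rle0 _ kpos); move: h; rewrite hS => h.
  have := le_trans h (lerB hle (lexx ((l%:R ^- d) * S2))).
  by rewrite -{1}[ipA A u u]subr0 lerD2l lerN2.
have h0 : S2 = 0 by apply/eqP; rewrite eq_le hS2 S2_ge0.
move/eqP: hu0; apply; apply: shift_zero => // x j.
have hx : ipAP A (Qx x) (u - Pi A l x u) (u - Pi A l x u) = 0.
  by apply: (psumr_eq0P _ h0) => // y _; exact: (ipAP_ge0 hc0 hAell).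
have hg : grad (u - Pi A l x u) x = 0.
  apply: (ipAP_eq0 hc0 hAell (P := Qx x)); first by rewrite hx.
  by rewrite /Qx inE subrr Qm0.
have := grad0_shift j hg; rewrite !ffunE.
case: (Pi_Vx x u) => _ hs.
rewrite (hs x); last by rewrite subrr notQ0 // ltnW.
rewrite hs; last by rewrite addrAC subrr add0r notQe.
by rewrite !subr0.
Qed.

Lemma TT_part3 u : in_X u -> ipA A (TT A l u) (TT A l u) <= ipA A (TT A l u) u.
Proof.
move=> hX.
set t := TT A l u.
have htX : in_X t := in_X_TT u.
have hDX : in_X (u - t).
  rewrite /in_X (eq_bigr (fun y => u y - t y)); last by move=> y _; rewrite !ffunE.
  by rewrite sumrB hX htX subrr.
have h1 := TT_lower (u - t).
rewrite TT_B !ipA_Bl !ipA_Br in h1.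
have e1 : ipA A (TT A l t) u = ipA A t t by rewrite TT_sym.
have e2 : ipA A u t = ipA A t u by rewrite ipA_sym.
have h2 := TT_upper t.
rewrite e1 -/t in h1.
rewrite -subr_ge0.
apply: le_trans h1 _; rewrite lerBlDr lerDl subr_ge0; exact: h2.
Qed.

Lemma all_parts x u : in_X u ->
  (0 <= ipA A (Pi A l x u) u /\ ipA A (Pi A l x u) u <= ipAP A (Qx x) u u)
  /\ (0 <= ipA A (TT A l u) u /\ ipA A (TT A l u) u <= ipA A u u
      /\ (u != 0 -> 0 < ipA A (TT A l u) u /\ ipA A (TT A l u) u < ipA A u u))
  /\ ipA A (TT A l u) (TT A l u) <= ipA A (TT A l u) u.
Proof using hAlin hAsym hc0 hAell hd hn hl hln.
move=> hX; split; first exact: part1.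
split; last exact: TT_part3.
split; first exact: TT_lower.
split; first exact: TT_upper.
move=> h0; split; [exact: TT_strict_lower | exact: TT_strict_upper].
Qed.

End Main.

Unset Implicit Arguments.

Theorem lemma3p4 (R : realFieldType) (d m L N l : nat)
  (hd : (2 <= d)%N) (hm : (1 <= m)%N) (hL : (3 <= L)%N) (hLodd : odd L)
  (hN : (1 <= N)%N) (hl : (3 <= l)%N) (hlN : (l - 1 < L ^ N)%N)
  (A : 'M[R]_(m, d) -> 'M[R]_(m, d)) (hAlin : linear A)
  (hAsym : forall F G, frob (A F) G = frob F (A G))
  (c0 : R) (hc0 : 0 < c0) (hAell : forall F, c0 * frob F F <= frob (A F) F)
  (phi : field R d (L ^ N) m) (hphi : in_X phi) (x : pt d (L ^ N)) :
  (0 <= ipA A (Pi A l x phi) phi /\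
   ipA A (Pi A l x phi) phi
     <= \sum_(y : pt d (L ^ N) | inQminus l (y - x))
          frob (A (grad phi y)) (grad phi y))
  /\ (0 <= ipA A (TT A l phi) phi /\ ipA A (TT A l phi) phi <= ipA A phi phi
      /\ (phi != 0 -> 0 < ipA A (TT A l phi) phi
                      /\ ipA A (TT A l phi) phi < ipA A phi phi))
  /\ ipA A (TT A l phi) (TT A l phi) <= ipA A (TT A l phi) phi.
Proof.
have hn : (2 < L ^ N)%N by apply: leq_trans hlN; lia.
exact: (all_parts hAlin hAsym hc0 hAell hd hn hl hlN x hphi).
Qed.
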